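(* For every integers $d \geq 2$ and $s \geq 1$, $$\mathsf U_{d,s} \subseteq \mathsf L_{d,s} \subseteq \mathsf B_d.$$ In particular, $$\overline{\bigcup_{s\geq 1}\mathsf L_{d,s}}=\mathsf B_d.$$
   Context: $\mathsf B_d$ is the set of $d\times d$ bistochastic matrices. For $U\in\mathcal U(ds)$ (unitary $ds\times ds$ matrices) viewed as a $d\times d$ block matrix with blocks $U_{ij}\in M_s(\mathbb C)$, $\phi_{d,s}(U)=\big(\tfrac1s\|U_{ij}\|_F^2\big)_{i,j=1}^d$ with $\|X\|_F=\operatorname{Tr}(XX^* )^{1/2}$, and $\mathsf U_{d,s}:=\phi_{d,s}(\mathcal U(ds))$. $\Delta_d$ is the probability simplex in $\mathbb R^d$. $\mathsf{Brac}_{d,s}$ is the set of $(\alpha,\beta)\in\Delta_d^2$ for which there exist $A_1,\dots,A_d,B_1,\dots,B_d\in M_s(\mathbb C)$ with $\sum_i A_iA_i^*=\sum_iB_iB_i^*=I_s$, $\sum_iA_iB_i^*=0$, $\tfrac1s\|A_i\|_F^2=\alpha_i$, $\tfrac1s\|B_i\|_F^2=\beta_i$ for all $i$. The set of generalized bracelet matrices $\mathsf L_{d,s}$ is the set of $B\in\mathsf B_d$ such that for all rows $i_1\ne i_2$, $(B_{i_1\cdot},B_{i_2\cdot})\in\mathsf{Brac}_{d,s}$ and for all columns $j_1\ne j_2$, $(B_{\cdot j_1},B_{\cdot j_2})\in\mathsf{Brac}_{d,s}$. *)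

(* Defs.v *)
From HB Require Import structures.
From mathcomp Require Import all_boot all_order all_algebra.
From mathcomp Require Import all_classical all_reals all_analysis.
From mathcomp Require Import complex.
Set Implicit Arguments. Unset Strict Implicit. Unset Printing Implicit Defensive.
Import Order.TTheory GRing.Theory Num.Theory.
Local Open Scope ring_scope.

Section Defs.
Variable R : realType.
Local Notation C := (R[i]).

Definition adjmx (m n : nat) (X : 'M[C]_(m, n)) : 'M[C]_(n, m) :=
  (map_mx (@conjc R) X)^T.

Definition frob2 (n : nat) (X : 'M[C]_n) : R := complex.Re (\tr (X *m adjmx X)).

Definition unitary (n : nat) (U : 'M[C]_n) : Prop :=
  U *m adjmx U = 1%:M /\ adjmx U *m U = 1%:M.

Lemma blk_index_subproof (d s : nat) (i : 'I_d) (a : 'I_s) : (i * s + a < d * s)%N.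
Proof.
case: i a => i Hi [a Ha] /=.
have H : (i.+1 * s <= d * s)%N by rewrite leq_mul2r Hi orbT.
apply: leq_trans H; rewrite mulSn addnC ltn_add2r //.
Qed.
Definition blk_index (d s : nat) (i : 'I_d) (a : 'I_s) : 'I_(d * s) :=
  Ordinal (blk_index_subproof i a).

Definition block (d s : nat) (U : 'M[C]_(d * s)) (i j : 'I_d) : 'M[C]_s :=
  \matrix_(a < s, b < s) U (blk_index i a) (blk_index j b).

Definition phi (d s : nat) (U : 'M[C]_(d * s)) : 'M[R]_d :=
  \matrix_(i < d, j < d) ((s%:R)^-1 * frob2 (block U i j)).

Definition Uset (d s : nat) : set 'M[R]_d :=
  [set M | exists U : 'M[C]_(d * s), unitary U /\ M = phi U].

Definition bistochastic (d : nat) (B : 'M[R]_d) : Prop :=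
  (forall i j, 0 <= B i j) /\
  (forall i, \sum_(j < d) B i j = 1) /\
  (forall j, \sum_(i < d) B i j = 1).
Definition Bset (d : nat) : set 'M[R]_d := [set B | bistochastic B].

Definition simplex (d : nat) (a : 'I_d -> R) : Prop :=
  (forall i, 0 <= a i) /\ \sum_(i < d) a i = 1.

Definition Brac (d s : nat) (alpha beta : 'I_d -> R) : Prop :=
  simplex alpha /\ simplex beta /\
  exists A B : 'I_d -> 'M[C]_s,
    \sum_(i < d) (A i *m adjmx (A i)) = 1%:M /\
    \sum_(i < d) (B i *m adjmx (B i)) = 1%:M /\
    \sum_(i < d) (A i *m adjmx (B i)) = 0 /\
    (forall i, (s%:R)^-1 * frob2 (A i) = alpha i) /\
    (forall i, (s%:R)^-1 * frob2 (B i) = beta i).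

Definition Lset (d s : nat) : set 'M[R]_d :=
  [set M | bistochastic M /\
    (forall i1 i2 : 'I_d, i1 != i2 -> Brac s (fun j => M i1 j) (fun j => M i2 j)) /\
    (forall j1 j2 : 'I_d, j1 != j2 -> Brac s (fun i => M i j1) (fun i => M i j2))].

End Defs.

(* Main.v *)
Require Import Defs.
From HB Require Import structures.
From mathcomp Require Import all_boot all_order all_algebra.
From mathcomp Require Import all_classical all_reals all_analysis.
From mathcomp Require Import complex.
Import Order.TTheory GRing.Theory Num.Theory.
Import numFieldNormedType.Exports.
Local Open Scope classical_set_scope.
Local Open Scope ring_scope.
From mathcomp Require Import fingroup perm.
From mathcomp Require Import zify ring lra.
Set Implicit Arguments. Unset Strict Implicit. Unset Printing Implicit Defensive.
Section Aux.
Variable R : realType.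
Local Notation C := (R[i]).
Lemma blk_index_inj d s (i i' : 'I_d) (a a' : 'I_s) :
  blk_index i a = blk_index i' a' -> i = i' /\ a = a'.
Proof.
move/(congr1 val) => /= H.
case: i a i' a' H => [i Hi] [a Ha] [i' Hi'] [a' Ha'] /= H.
have E : i = i' by nia.
subst i'; have E : a = a' by lia.
by subst a'; split; apply: val_inj.
Qed.

Lemma sum_blk (V : nmodType) d s (F : 'I_(d*s) -> V) :
  \sum_k F k = \sum_(i < d) \sum_(a < s) F (blk_index i a).
Proof.
rewrite pair_bigA /=.
rewrite (reindex (fun p : 'I_d * 'I_s => blk_index p.1 p.2)) //=.
apply: onW_bij; apply: inj_card_bij.
  by move=> [i a] [i1 a1] /= /blk_index_inj [E1 E2]; rewrite E1 E2.
by rewrite card_prod !card_ord.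
Qed.

Lemma block_mul d s (A B : 'M[C]_(d*s)) i k :
  block (A *m B) i k = \sum_j block A i j *m block B j k.
Proof.
apply/matrixP => a b; rewrite !mxE summxE sum_blk.
by apply: eq_bigr => j _; rewrite !mxE; apply: eq_bigr => c _; rewrite !mxE.
Qed.

Lemma block_adj d s (U : 'M[C]_(d*s)) i j :
  block (adjmx U) i j = adjmx (block U j i).
Proof. by apply/matrixP => a b; rewrite /adjmx !mxE. Qed.

Lemma adjmxK m n (X : 'M[C]_(m, n)) : adjmx (adjmx X) = X.
Proof. by apply/matrixP => a b; rewrite /adjmx !mxE conjcK. Qed.

Lemma block1 d s (i k : 'I_d) :
  block (1%:M : 'M[C]_(d*s)) i k = if i == k then 1%:M else 0.
Proof.
apply/matrixP => a b; rewrite !mxE.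
case: (i =P k) => [<-|ne]; rewrite !mxE.
  case: (a =P b) => [<-|nab]; first by rewrite eqxx.
  by case: eqP => // /blk_index_inj [_ E]; case: nab.
by case: eqP => // /blk_index_inj [E _]; case: ne.
Qed.

Lemma ReD (x y : C) : complex.Re (x + y) = complex.Re x + complex.Re y.
Proof. by move: x y => [a b] [c e]. Qed.

Lemma Re_sum I (r : seq I) (P : pred I) (F : I -> C) :
  complex.Re (\sum_(i <- r | P i) F i) = \sum_(i <- r | P i) complex.Re (F i).
Proof. exact: (big_morph _ ReD). Qed.

Lemma Re_nat n : complex.Re (n%:R : C) = n%:R.
Proof. by elim: n => // n IH; rewrite !mulrS ReD IH. Qed.

Lemma frob2E s (X : 'M[C]_s) :
  frob2 X = \sum_a \sum_b complex.Re (X a b * (X a b)^*%C).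
Proof.
rewrite /frob2 /mxtrace Re_sum; apply: eq_bigr => a _.
by rewrite !mxE Re_sum; apply: eq_bigr => b _; rewrite /adjmx !mxE.
Qed.

Lemma Re_mulJ_ge0 (x : C) : 0 <= complex.Re (x * x^*%C).
Proof. by have := mulcJ_ge0 x; rewrite lecE => /andP[_]. Qed.

Lemma frob2_ge0 s (X : 'M[C]_s) : 0 <= frob2 X.
Proof.
by rewrite frob2E; apply: sumr_ge0 => a _; apply: sumr_ge0 => b _; exact: Re_mulJ_ge0.
Qed.

Lemma frob2_adj s (X : 'M[C]_s) : frob2 (adjmx X) = frob2 X.
Proof. by rewrite /frob2 adjmxK mxtrace_mulC. Qed.

Lemma frob2_sum d s (X : 'I_d -> 'M[C]_s) :
  \sum_j frob2 (X j) = complex.Re (\tr (\sum_j X j *m adjmx (X j))).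
Proof. by rewrite (raddf_sum (@mxtrace _ s)) Re_sum. Qed.

Lemma rows_sum d s (V : 'M[C]_(d*s)) i1 i2 : V *m adjmx V = 1%:M ->
  \sum_j block V i1 j *m adjmx (block V i2 j) = if i1 == i2 then 1%:M else 0.
Proof.
move=> H; rewrite -block1 -H block_mul; apply: eq_bigr => j _.
by rewrite block_adj.
Qed.

Lemma phi_adj d s (U : 'M[C]_(d*s)) i j : phi (adjmx U) j i = phi U i j.
Proof. by rewrite !mxE block_adj frob2_adj. Qed.

Lemma row_props d s (V : 'M[C]_(d*s)) : (1 <= s)%N -> V *m adjmx V = 1%:M ->
  (forall i j, 0 <= phi V i j) /\ (forall i, \sum_j phi V i j = 1) /\
  forall i1 i2, i1 != i2 -> Brac s (fun j => phi V i1 j) (fun j => phi V i2 j).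
Proof.
move=> s1 H.
have pos : forall i j, 0 <= phi V i j.
  by move=> i j; rewrite mxE mulr_ge0 ?invr_ge0 ?ler0n ?frob2_ge0.
have rs : forall i, \sum_j phi V i j = 1.
  move=> i; under eq_bigr do rewrite mxE.
  rewrite -mulr_sumr frob2_sum rows_sum // eqxx mxtrace1 Re_nat mulVf //.
  by rewrite pnatr_eq0 -lt0n.
split=> //; split=> // i1 i2 ne.
split; first by split.
split; first by split.
exists (fun j => block V i1 j), (fun j => block V i2 j).
rewrite !rows_sum // !eqxx (negbTE ne).
by do 3!split=> //; split=> j; rewrite mxE.
Qed.

Lemma part1 d s : (1 <= s)%N -> @Uset R d s `<=` @Lset R d s.
Proof.
move=> s1 M [U [[H1 H2] ->]].
have [pos [rs br]] := @row_props d s U s1 H1.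
have H2' : adjmx U *m adjmx (adjmx U) = 1%:M by rewrite adjmxK.
have [_ [cs bc]] := @row_props d s _ s1 H2'.
split.
  split=> //; split=> // j.
  by rewrite -(cs j); apply: eq_bigr => i _; rewrite phi_adj.
split; first exact: br.
move=> j1 j2 ne.
have E : forall j, (fun i => phi U i j) = (fun i => phi (adjmx U) j i).
  by move=> j; apply: boolp.funext => i; rewrite phi_adj.
by have := bc j1 j2 ne; rewrite -!E.
Qed.

Lemma extend_perm (T : finType) (s : seq (T * T)) :
  uniq (map fst s) -> uniq (map snd s) ->
  exists g : {perm T}, forall p, p \in s -> g p.1 = p.2.
Proof.
elim: s => [|[x y] s IH] /=; first by move=> _ _; exists 1%g.
move=> /andP[nx u1] /andP[ny u2].
have [g Hg] := IH u1 u2.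
exists (g * tperm (g x) y)%g => p; rewrite inE => /orP[/eqP -> /=|ps].
  by rewrite permM tpermL.
rewrite permM Hg // tpermD //.
  apply/eqP => E; move: (Hg p ps); rewrite -E => /perm_inj E2.
  by move: nx; rewrite -E2; apply/negP/negPn/mapP; exists p.
apply/eqP => E; move: ny; rewrite E; apply/negP/negPn/mapP; by exists p.
Qed.

Definition off d (f : 'I_d -> nat) (j : 'I_d) := (\sum_(l < d | (l < j)%N) f l)%N.

Lemma sum_sub_le d (P P' : pred 'I_d) (f : 'I_d -> nat) :
  (forall l, P l -> P' l) -> (\sum_(l | P l) f l <= \sum_(l | P' l) f l)%N.
Proof.
move=> H; rewrite [X in (_ <= X)%N](bigID P) /=.
rewrite (eq_bigl P); first exact: leq_addr.
move=> l; case Pl: (P l); rewrite ?andbT ?andbF //; exact: H.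
Qed.

Lemma off_step d (f : 'I_d -> nat) j :
  (off f j + f j = \sum_(l < d | (l <= j)%N) f l)%N.
Proof.
rewrite [RHS](bigD1 j) //= addnC; congr (_ + _)%N.
by apply: eq_bigl => l; rewrite ltn_neqAle andbC.
Qed.

Lemma off_le d (f : 'I_d -> nat) j : (off f j + f j <= \sum_l f l)%N.
Proof. by rewrite off_step; apply: sum_sub_le. Qed.

Lemma off_mono d (f : 'I_d -> nat) (j j' : 'I_d) : (j < j')%N -> (off f j + f j <= off f j')%N.
Proof.
move=> lt; rewrite off_step; apply: sum_sub_le => l /= lj.
exact: leq_ltn_trans lj lt.
Qed.

Lemma off_inj d (f : 'I_d -> nat) (j j' : 'I_d) t t' : (t < f j)%N -> (t' < f j')%N ->
  (off f j + t = off f j' + t')%N -> j = j' /\ t = t'.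
Proof.
move=> ht ht' E.
case: (ltngtP j j') => [lt|lt|eq].
- have := off_mono f lt; lia.
- have := off_mono f lt; lia.
- have ej : j = j' by apply: val_inj.
  by subst j'; split=> //; lia.
Qed.

Lemma perm_unitary k (g : {perm 'I_k}) : unitary (perm_mx g : 'M[C]_k).
Proof.
have E : adjmx (perm_mx g : 'M[C]_k) = perm_mx g^-1.
  by rewrite /adjmx map_perm_mx tr_perm_mx.
by rewrite /unitary E -!perm_mxM mulgV mulVg perm_mx1.
Qed.

Lemma frob2_perm d s (g : {perm 'I_(d * s)}) i j :
  frob2 (block (perm_mx g : 'M[C]_(d * s)) i j) =
  \sum_a \sum_b ((g (blk_index i a) == blk_index j b)%:R : R).
Proof.
rewrite frob2E; apply: eq_bigr => a _; apply: eq_bigr => b _.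
rewrite !mxE; case: eqP => _ /=.
  by rewrite mulr1 mul0r subr0.
by rewrite !mul0r subr0.
Qed.

Lemma frob2_lb d n (g : {perm 'I_(d * n.+1)}) i j (c : nat) (h1 h2 : 'I_c -> 'I_n.+1) :
  injective h1 -> (forall t, g (blk_index i (h1 t)) = blk_index j (h2 t)) ->
  c%:R <= frob2 (block (perm_mx g : 'M[C]_(d * n.+1)) i j).
Proof.
move=> inj Hg; rewrite frob2_perm.
set F := fun a : 'I_n.+1 => \sum_(b < n.+1) ((g (blk_index i a) == blk_index j b)%:R : R).
rewrite -/(\sum_a F a).
have F0 : forall a, 0 <= F a by move=> a; apply: sumr_ge0 => b _; rewrite ler0n.
rewrite (bigID (fun a => a \in (h1 @: [set: 'I_c])%SET)) /=.
have H0 : 0 <= \sum_(a | a \notin (h1 @: [set: 'I_c])%SET) F a by apply: sumr_ge0.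
have H : c%:R <= \sum_(a | a \in (h1 @: [set: 'I_c])%SET) F a.
  rewrite big_imset /=; last by move=> x y _ _; apply: inj.
  have -> : (c%:R : R) = \sum_(t in [set: 'I_c]%SET) 1.
    by rewrite sumr_const cardsT card_ord.
  apply: ler_sum => t _; rewrite /F (bigD1 (h2 t)) //= Hg eqxx.
  by rewrite lerDl; apply: sumr_ge0 => b _; rewrite ler0n.
by apply: le_trans H _; rewrite lerDl.
Qed.

Lemma construct d n (m : 'I_d -> 'I_d -> nat) :
  (forall i, \sum_j m i j <= n.+1)%N -> (forall j, \sum_i m i j <= n.+1)%N ->
  exists g : {perm 'I_(d * n.+1)}, forall i j,
    (m i j)%:R <= frob2 (block (perm_mx g : 'M[C]_(d * n.+1)) i j).
Proof.
move=> rowb colb.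
pose src (k : 'I_d * 'I_d * 'I_n.+1) : 'I_(d * n.+1) :=
  blk_index k.1.1 (inord (off (m k.1.1) k.1.2 + k.2)).
pose tgt (k : 'I_d * 'I_d * 'I_n.+1) : 'I_(d * n.+1) :=
  blk_index k.1.2 (inord (off (fun l => m l k.1.2) k.1.1 + k.2)).
pose P := [pred k : 'I_d * 'I_d * 'I_n.+1 | (k.2 < m k.1.1 k.1.2)%N].
have bnd1 : forall i j t, (t < m i j)%N -> (off (m i) j + t < n.+1)%N.
  move=> i j t ht; have := off_le (m i) j; have := rowb i; lia.
have bnd2 : forall i j t, (t < m i j)%N -> (off (fun l => m l j) i + t < n.+1)%N.
  move=> i j t ht; have := off_le (fun l => m l j) i; have := colb j; lia.
have injs : {in P &, injective src}.
  move=> [[i j] t] [[i' j'] t']; rewrite !inE /= => Pk Pk'.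
  move=> /blk_index_inj [/= ei]; subst i' => /(congr1 val) /=.
  rewrite !inordK ?bnd1 //.
  by move/off_inj => [] // ej et; subst j'; congr (_, _, _); apply: val_inj.
have injt : {in P &, injective tgt}.
  move=> [[i j] t] [[i' j'] t']; rewrite !inE /= => Pk Pk'.
  move=> /blk_index_inj [/= ej]; subst j' => /(congr1 val) /=.
  rewrite !inordK ?bnd2 //.
  move/(@off_inj _ (fun l => m l j)) => [] // ei et; subst i'.
  by congr (_, _, _); apply: val_inj.
have U1 : uniq (map fst [seq (src k, tgt k) | k <- enum P]).
  rewrite -map_comp (map_inj_in_uniq (f := fun k => src k)) ?enum_uniq //.
  by move=> x y; rewrite !mem_enum; apply: injs.
have U2 : uniq (map snd [seq (src k, tgt k) | k <- enum P]).
  rewrite -map_comp (map_inj_in_uniq (f := fun k => tgt k)) ?enum_uniq //.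
  by move=> x y; rewrite !mem_enum; apply: injt.
have [g Hg] := extend_perm U1 U2.
exists g => i j.
apply: (@frob2_lb d n g i j (m i j) (fun t => inord (off (m i) j + t))
          (fun t => inord (off (fun l => m l j) i + t))).
  by move=> t t' E; have := congr1 (@nat_of_ord _) E; rewrite /= !inordK ?bnd1 // => /addnI /val_inj.
move=> t.
have ht : (t < n.+1)%N.
  have := ltn_ord t; have := bnd1 i j 0%N; have := off_le (m i) j; have := rowb i; lia.
have Pk : P (i, j, inord t) by rewrite /= inordK.
have := Hg (src (i, j, inord t), tgt (i, j, inord t)).
rewrite map_f ?mem_enum // => /(_ isT).
by rewrite /src /tgt /= inordK.
Qed.

Lemma dense d (B : 'M[R]_d) e : (0 < d)%N -> bistochastic B -> 0 < e ->
  exists n, exists U : 'M[C]_(d * n.+1), unitary U /\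
    forall i j, `|B i j - phi U i j| < e.
Proof.
move=> d0 [Bpos [Brow Bcol]] e0.
pose n := Num.truncn (d%:R / e).
pose N : R := n.+1%:R.
have N0 : 0 < N by rewrite ltr0n.
have dN : d%:R * N^-1 < e.
  have := truncnS_gt (d%:R / e); rewrite -/n -/N.
  by rewrite ltr_pdivrMr // => H; rewrite ltr_pdivrMr // mulrC.
pose m i j := Num.truncn (N * B i j).
have mle : forall i j, (m i j)%:R <= N * B i j.
  by move=> i j; rewrite truncn_le mulr_ge0 // ltW.
have mgt : forall i j, N * B i j < (m i j).+1%:R by move=> i j; apply: truncnS_gt.
have rowb : forall i, (\sum_j m i j <= n.+1)%N.
  move=> i; rewrite -(ler_nat R) natr_sum.
  apply: (@le_trans _ _ (\sum_j N * B i j)); first by apply: ler_sum => j _.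
  by rewrite -mulr_sumr Brow mulr1.
have colb : forall j, (\sum_i m i j <= n.+1)%N.
  move=> j; rewrite -(ler_nat R) natr_sum.
  apply: (@le_trans _ _ (\sum_i N * B i j)); first by apply: ler_sum => i _.
  by rewrite -mulr_sumr Bcol mulr1.
have [g Hg] := construct rowb colb.
exists n, (perm_mx g); split; first exact: perm_unitary.
have [[Qpos [Qrow Qcol]] _] := @part1 d n.+1 isT (phi (perm_mx g : 'M[C]_(d * n.+1)))
   (ex_intro _ _ (conj (perm_unitary g) erefl)).
set Q := phi _ in Qpos Qrow Qcol *.
have lb : forall i k, B i k - N^-1 < Q i k.
  move=> i k; rewrite /Q mxE -/N.
  apply: lt_le_trans (_ : N^-1 * (m i k)%:R <= _); last first.
    by rewrite ler_pM2l ?invr_gt0 // Hg.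
  have -> : B i k - N^-1 = N^-1 * (N * B i k - 1).
    by field; rewrite gt_eqF.
  rewrite ltr_pM2l ?invr_gt0 //.
  by have := mgt i k; rewrite -natr1; lra.
clearbody Q N.
move=> i j.
have sumE : \sum_k (Q i k - B i k + N^-1) = d%:R * N^-1.
  by rewrite big_split sumrB /= Qrow Brow subrr add0r sumr_const card_ord mulr_natl.
have up : Q i j - B i j + N^-1 <= d%:R * N^-1.
  rewrite -sumE (bigD1 j) //= lerDl; apply: sumr_ge0 => k _.
  by have := lb i k; lra.
have lN : N^-1 <= d%:R * N^-1.
  by rewrite ler_peMl ?ler1n // invr_ge0 ltW.
have := lb i j.
rewrite ltr_norml; move=> h; move: up lN dN h; generalize (d%:R * N^-1) => D up lN dN h; apply/andP; split; (have Ni : 0 < N^-1 by rewrite invr_gt0); lra.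
Qed.
End Aux.

Theorem proposition3p12 (R : realType) (d : nat) (hd : (2 <= d)%N) :
  (forall s : nat, (1 <= s)%N ->
     @Uset R d s `<=` @Lset R d s /\ @Lset R d s `<=` @Bset R d) /\
  closure (\bigcup_(s in [set s : nat | (1 <= s)%N]) @Lset R d s : set 'M[R]_d) = @Bset R d.
Proof.
have d0 : (0 < d)%N by apply: leq_trans hd.
split.
  by move=> s s1; split; [exact: part1 | move=> M []].
apply/seteqP; split.
  move=> p clp.
  have approx : forall e : R, 0 < e -> exists q : 'M[R]_d,
      bistochastic q /\ forall i j, `|p i j - q i j| < e.
    move=> e e0; have [q [[s _ [bq _]] pq]] := clp _ (nbhsx_ballx p e e0).
    exists q; split=> // i j.
    by case: pq => _ /(_ i j).
  have dR : 0 < (d%:R : R) by rewrite ltr0n.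
  have rowsum : forall (f : 'M[R]_d -> 'I_d -> R),
      (forall q, bistochastic q -> \sum_k f q k = 1) ->
      (forall e : R, 0 < e -> exists q : 'M[R]_d, bistochastic q /\
          forall k, `|f p k - f q k| < e) ->
      \sum_k f p k = 1.
    move=> f Hf Ha; apply/eqP; rewrite -subr_eq0 -normr_le0.
    apply/ler_addgt0Pr => e e0; rewrite add0r.
    have [q [bq Hq]] := Ha (e / d%:R) (divr_gt0 e0 dR).
    rewrite -(Hf q bq) -sumrB.
    apply: le_trans (ler_norm_sum _ _ _) _.
    apply: (@le_trans _ _ (\sum_(k < d) (e / d%:R))).
      by apply: ler_sum => k _; apply: ltW.
    by rewrite sumr_const card_ord -[_ *+ d]mulr_natr divfK // gt_eqF.
  split; [|split].
  - move=> i j; apply/ler_addgt0Pr => e e0.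
    have [q [[qpos _] Hq]] := approx e e0.
    have := Hq i j; rewrite ltr_norml => /andP[h1 h2].
    have := qpos i j; lra.
  - move=> i; apply: (rowsum (fun q k => q i k)).
      by move=> q [_ [qr _]].
    move=> e e0; have [q [bq Hq]] := approx e e0.
    by exists q; split=> // k; apply: Hq.
  - move=> j; apply: (rowsum (fun q k => q k j)).
      by move=> q [_ [_ qc]].
    move=> e e0; have [q [bq Hq]] := approx e e0.
    by exists q; split=> // k; apply: Hq.
move=> B bB A /nbhs_ballP [e e0 sub].
have [n [U [uU H]]] := dense d0 bB e0.
exists (phi U); split.
  exists n.+1 => //.
  by apply: part1 => //; exists U.
apply: sub; split=> // i j.
Qed.
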